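(* Algorithm Exact Silent Count solves the $k$-ribbon problem on a line of $n$ agents, for any choice of starting agent, within $3n$ rounds, using $6n$ message bits in total and $2\log n+\log k+O(1)$ bits of memory per agent.
   Context: Message passing model (1D): a line graph of $n$ agents, synchronous rounds, reliable messages between neighbors each round. All agents run the same algorithm, have no knowledge of their global position or of $n$, share a common sense of direction, and endpoints know they are endpoints. Initially all agents but one arbitrary starting agent are asleep; a sleeping agent wakes upon receiving a message. The $k$-ribbon problem: every agent outputs a color in $\{1,\dots,k\}$ such that each color class is contiguous, colors increase from left to right, and the sizes of any two color classes differ by at most $1$. Algorithm Exact Silent Count: the starting agent sends the single bit $0$ to the left and the bit $1$ to the right (if it is an endpoint, it sends both bits in one 2-bit message to its unique neighbor). Every agent forwards each received bit in the same direction, except endpoints, which send it back. The $d$-side endpoint sets $n_d\leftarrow 0$ on waking and never changes it. Any other agent, the first time it receives a message from direction $d$, sets $n_{\bar d}\leftarrow 0$ (where $\bar d$ is the opposite direction) and increments $n_{\bar d}$ every round until it receives a message from direction $\bar d$, at which point it stops and sets $n_{\bar d}\leftarrow n_{\bar d}/2$. When an agent has final values of $n_\ell$ and $n_r$ and has already sent $0$ to the left and $1$ to the right, it decides the color its position receives in the $k$-ribbon (determined by $n_\ell$, $n_r$, $k$) and halts. *)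

(* Defs.v *)
From mathcomp Require Import all_boot.

Set Implicit Arguments.
Unset Strict Implicit.
Unset Printing Implicit Defensive.

(* The k-ribbon problem.  Agents are the positions 0 .. n-1 (left to   *)
(* right); [c i] is the color output by agent i.                       *)

Definition class_size (n : nat) (c : nat -> nat) (a : nat) : nat :=
  count (fun i => c i == a) (iota 0 n).

Definition is_k_ribbon (n k : nat) (c : nat -> nat) : Prop :=
  (forall i, i < n -> 1 <= c i <= k) /\
  (forall i j l, i <= j -> j <= l -> l < n -> c i = c l -> c j = c i) /\
  (forall i j, i <= j -> j < n -> c i <= c j) /\
  (forall a b, 1 <= a <= k -> 1 <= b <= k ->
     class_size n c a <= (class_size n c b).+1).

(* The color of the position with [nl] agents on its left and [nr]
   agents on its right, in the balanced k-ribbon of the line of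
   nl + nr + 1 agents (the decision rule of the algorithm). *)
Definition ribbon_color (k nl nr : nat) : nat := (nl * k) %/ (nl + nr + 1) + 1.

(* A counter n_d: not started, running (current value, and the bits of
   the message that started it), or final (already halved). *)
Inductive counter : Type :=
| Idle
| Run of nat & seq bool
| Fin of nat.

Record astate : Type := AState {
  awake  : bool;
  halted : bool;
  cnt_l  : counter;
  cnt_r  : counter;
  sent_l : bool;           (* has sent 0 to the left  *)
  sent_r : bool;           (* has sent 1 to the right *)
  output : option nat
}.

Definition asleep : astate := AState false false Idle Idle false false None.

Definition tick (c : counter) : counter :=
  if c is Run v B then Run v.+1 B else c.

Definition stop_if (m : seq bool) (c : counter) : counter :=
  if c is Run v B then (if has (fun x => x \in B) m then Fin v./2 else c) else c.

Definition start_if (m : seq bool) (c : counter) : counter :=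
  if c is Idle then (if m != [::] then Run 0 m else c) else c.

Definition is_fin (c : counter) : option nat := if c is Fin v then Some v else None.

Definition try_halt (k : nat) (x : astate) : astate :=
  match is_fin (cnt_l x), is_fin (cnt_r x) with
  | Some p, Some q =>
      if sent_l x && sent_r x && ~~ halted x then
        AState (awake x) true (cnt_l x) (cnt_r x) (sent_l x) (sent_r x)
               (Some (ribbon_color k p q))
      else x
  | _, _ => x
  end.

(* Waking up: the d-side endpoint sets n_d <- 0 (and, having no
   d-neighbour, trivially satisfies the sending condition on side d). *)
Definition wake (isL isR : bool) (x : astate) : astate :=
  if awake x then x else
  AState true false (if isL then Fin 0 else Idle) (if isR then Fin 0 else Idle)
         isL isR None.

(* One round of a (non-starting-round) agent that knows only whether it
   is the left / right endpoint.  [a] = bits received from the left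
   neighbour, [b] = bits received from the right neighbour. *)
Definition step_agent (isL isR : bool) (k : nat) (x : astate)
    (a b : seq bool) : astate * seq bool * seq bool :=
  if halted x then (x, [::], [::]) else
  if ~~ awake x && (a == [::]) && (b == [::]) then (x, [::], [::]) else
  let x1 := wake isL isR x in
  let cl := tick (cnt_l x1) in
  let cr := tick (cnt_r x1) in
  let '(cl', cr', toL, toR) :=
    if isL && isR then (cl, cr, [::], [::])
    else if isL then
      (cl, start_if b (stop_if b cr), [::], b)
    else if isR then
      (start_if a (stop_if a cl), cr, a, [::])
    else
      (start_if b (stop_if a cl), start_if a (stop_if b cr), b, a) in
  let x2 := AState true false cl' cr'
                   (sent_l x1 || (false \in toL)) (sent_r x1 || (true \in toR))
                   None in
  (try_halt k x2, toL, toR).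

Definition start_agent (isL isR : bool) (k : nat) : astate * seq bool * seq bool :=
  let '(cl, cr, toL, toR) :=
    if isL && isR then (Fin 0, Fin 0, [::], [::])
    else if isL then (Fin 0, Run 0 [:: false; true], [::], [:: false; true])
    else if isR then (Run 0 [:: false; true], Fin 0, [:: false; true], [::])
    else (Idle, Idle, [:: false], [:: true]) in
  (try_halt k (AState true false cl cr true true None), toL, toR).

Record config : Type := Config {
  st   : nat -> astate;
  msgL : nat -> seq bool;   (* bits sent by agent i to agent i-1 *)
  msgR : nat -> seq bool    (* bits sent by agent i to agent i+1 *)
}.

Definition init_config (n k s : nat) : config :=
  let r := start_agent (s == 0) (s == n.-1) k in
  Config (fun i => if i == s then r.1.1 else asleep)
         (fun i => if i == s then r.1.2 else [::])
         (fun i => if i == s then r.2 else [::]).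

Definition next_config (n k : nat) (c : config) : config :=
  let fromL i := if i is j.+1 then msgR c j else [::] in
  let fromR i := if i.+1 < n then msgL c i.+1 else [::] in
  let r i := step_agent (i == 0) (i == n.-1) k (st c i) (fromL i) (fromR i) in
  Config (fun i => (r i).1.1) (fun i => (r i).1.2) (fun i => (r i).2).

(* configuration at the end of round r (round 1 = the starting agent's
   initial sending; round 0 = everybody asleep) *)
Fixpoint after_round (n k s r : nat) : config :=
  match r with
  | 0 => Config (fun _ => asleep) (fun _ => [::]) (fun _ => [::])
  | 1 => init_config n k s
  | r'.+1 => next_config n k (after_round n k s r')
  end.

Definition bits_in_round (n k s r : nat) : nat :=
  \sum_(i < n) (size (msgL (after_round n k s r) i) + size (msgR (after_round n k s r) i)).

(* Memory (in bits) used by a local state: one bit per boolean flag,   *)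
(* binary length for each stored natural number, 2 bits for a counter  *)
(* tag and 2 bits for the set of bits (subset of {0,1}) recorded by a  *)
(* running counter, 1 + binary length for the (optional) color.        *)

Definition bitlen (v : nat) : nat := (trunc_log 2 v).+1.

Definition counter_mem (c : counter) : nat :=
  match c with
  | Idle => 2
  | Run v _ => 2 + bitlen v + 2
  | Fin v => 2 + bitlen v
  end.

Definition state_mem (x : astate) : nat :=
  4 + counter_mem (cnt_l x) + counter_mem (cnt_r x) +
  (if output x is Some col then 1 + bitlen col else 1).

(* Main.v *)
Require Import Defs.
From mathcomp Require Import all_boot.
From mathcomp Require Import zify.
Set Implicit Arguments. Unset Strict Implicit. Unset Printing Implicit Defensive.

Module Cf.

Section CF.
Variables (N k s : nat).
(* n = N.+1 *)
Definition awP i r := (i < r + s) && (s < r + i).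
Definition Al i := if i < s then 1 + s - i else 2*N + 1 - s - i.
Definition Ar i := if s < i then 1 + i - s else 1 + s + i.
Definition ltAl i r := (i < s) && (r + i < 1 + s) || (s <= i) && (r + s + i < 2*N + 1).
Definition ltZl i r := (i < s) && (r < 1 + s + i) || (s <= i) && (r + s < 2*N + 1 + i).
Definition ltAr i r := (s < i) && (r + s < 1 + i) || (i <= s) && (r < 1 + s + i).
Definition ltZr i r := (s < i) && (r + s + i < 2*N + 1) || (i <= s) && (r + i < 2*N + 1 + s).
Definition geSl i r := (i <= s) && (s + 1 <= r + i) || (s < i) && (2*N + 1 + s <= r + i).
Definition geSr i r := (s <= i) && (i + 1 <= r + s) || (i < s) && (2*N + 1 + i <= r + s).
Definition haltP i r := [&& (i == 0) || ~~ ltZl i r, (i == N) || ~~ ltZr i r, geSl i r & geSr i r].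
Definition blP i (b : bool) := (s == 0) || (s == N) || (if b then s <= i else i < s).
Definition brP i (b : bool) := (s == 0) || (s == N) || (if b then s < i else i <= s).
Definition Bl i := [seq b <- [:: false; true] | blP i b].
Definition Br i := [seq b <- [:: false; true] | brP i b].
Definition clf i r := if i == 0 then Fin 0 else if ltAl i r then Idle else if ltZl i r then Run (r - Al i) (Bl i) else Fin i.
Definition crf i r := if i == N then Fin 0 else if ltAr i r then Idle else if ltZr i r then Run (r - Ar i) (Br i) else Fin (N - i).
Definition Sf i r := if (i <= N) && awP i r then
  AState true (haltP i r) (clf i r) (crf i r) (geSl i r) (geSr i r)
    (if haltP i r then Some (ribbon_color k i (N - i)) else None) else asleep.
Definition sR (b : bool) i r := [&& 0 < r, i < N &
  if b then ((s == N) && (r + s <= 4*N + 1) || (s != N) && (r + s <= 3*N + 1)) &&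
            [|| r + s == i + 1, r + s == i + 2*N + 1 | r + s == i + 4*N + 1]
  else ((s == 0) && (r + 2*N <= 5*N + 1 + s) || (s != 0) && (r + 2*N <= 4*N + 1 + s)) &&
            [|| r + 2*N == i + 1 + s, r + 2*N == i + 2*N + 1 + s | r + 2*N == i + 4*N + 1 + s]].
Definition sL (b : bool) i r := [&& 0 < r, 0 < i, i <= N &
  if b then ((s == N) && (r + s <= 4*N + 1) || (s != N) && (r + s <= 3*N + 1)) &&
            [|| r + s + i == 2*N + 1, r + s + i == 4*N + 1 | r + s + i == 6*N + 1]
  else ((s == 0) && (r + 2*N <= 5*N + 1 + s) || (s != 0) && (r + 2*N <= 4*N + 1 + s)) &&
            [|| r + 2*N + i == 2*N + 1 + s, r + 2*N + i == 4*N + 1 + s | r + 2*N + i == 6*N + 1 + s]].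
Definition mRf i r := [seq b <- [:: false; true] | sR b i r].
Definition mLf i r := [seq b <- [:: false; true] | sL b i r].
Definition inL i r := if i is j.+1 then mRf j r else [::].
Definition inR i r := if i.+1 < N.+1 then mLf i.+1 r else [::].
End CF.

End Cf.
Import Cf.

Section A.
Variables (N k s : nat).
Hypothesis Hs : s <= N.
Local Notation awP := (awP s).
Local Notation ltZl := (ltZl N s).
Local Notation ltAl := (ltAl N s).
Local Notation ltZr := (ltZr N s).
Local Notation ltAr := (ltAr s).
Local Notation geSl := (geSl N s).
Local Notation geSr := (geSr N s).
Local Notation haltP := (haltP N s).
Local Notation sR := (sR N s).
Local Notation sL := (sL N s).
Ltac U := rewrite ?/Cf.haltP /Cf.awP /Cf.ltZl /Cf.ltAl /Cf.ltZr /Cf.ltAr /Cf.geSl /Cf.geSr /Cf.sR /Cf.sL /blP /brP.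
Ltac SPL i := case: (ltngtP i s) => ? /=; case E0: (s == 0) => /=; case EN: (s == N) => /=.
Ltac LL i := U; SPL i; first [apply/idP/idP; lia | lia].
Ltac LB i := U; case; SPL i; first [apply/idP/idP; lia | lia].

Lemma aw_mono i r : awP i r -> awP i r.+1. Proof. U; lia. Qed.
Lemma halt_aw i r : haltP i r -> awP i r. Proof. U; lia. Qed.
Lemma halt_mono i r : i <= N -> haltP i r -> haltP i r.+1. Proof. U; lia. Qed.

Lemma MR b i r : i <= N -> 0 < r -> sR b i r.+1 =
  ~~ haltP i r && ((i == 0) && ((i < N) && sL b i.+1 r) || (i < N) && ((0 < i) && sR b i.-1 r)).
Proof. move: b; U; time (case; move=> ? ?; apply/idP/idP; lia). Qed.
Lemma ML b i r : i <= N -> 0 < r -> sL b i r.+1 =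
  ~~ haltP i r && ((i == N) && ((0 < i) && sR b i.-1 r) || (0 < i) && ((i < N) && sL b i.+1 r)).
Proof. move: b; U; time (case; move=> ? ?; apply/idP/idP; lia). Qed.
Lemma E1 b i r : i <= N -> 0 < r -> ~~ awP i r.+1 ->
  ((0 < i) && sR b i.-1 r = false) /\ ((i < N) && sL b i.+1 r = false).
Proof. move: b; U; time (case; SPL i; split; lia). Qed.
Lemma E2 i r : i <= N -> 0 < r -> ~~ awP i r -> awP i r.+1 ->
  (i < s) && ((i<N) && sL false i.+1 r) || (s < i) && ((0<i) && sR true i.-1 r).
Proof. time LL i. Qed.

Section CL.
Variables (i r : nat).
Hypotheses (Hi : 0 < i) (HiN : i <= N) (Hr : 0 < r).
Lemma C1 b : awP i r.+1 -> ~~ haltP i r -> ltAl i r.+1 -> (i == N) && sR b i.-1 r || (i < N) && sL b i.+1 r = false.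
Proof. move: b; time LB i. Qed.
Lemma C2 b : awP i r.+1 -> ~~ haltP i r -> ltAl i r -> ~~ ltAl i r.+1 ->
  (i == N) && sR b i.-1 r || (i < N) && sL b i.+1 r = blP N s i b.
Proof. move: b; time LB i. Qed.
Lemma C3 : awP i r.+1 -> ~~ haltP i r -> ~~ ltAl i r -> ltZl i r ->
  (blP N s i false && sR false i.-1 r || blP N s i true && sR true i.-1 r) = ~~ ltZl i r.+1.
Proof. time LL i. Qed.
End CL.
Section CR.
Variables (i r : nat).
Hypotheses (HiN : i < N) (Hr : 0 < r).
Lemma D1 b : awP i r.+1 -> ~~ haltP i r -> ltAr i r.+1 -> (i == 0) && sL b i.+1 r || (0 < i) && sR b i.-1 r = false.
Proof. move: b; time LB i. Qed.
Lemma D2 b : awP i r.+1 -> ~~ haltP i r -> ltAr i r -> ~~ ltAr i r.+1 ->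
  (i == 0) && sL b i.+1 r || (0 < i) && sR b i.-1 r = brP N s i b.
Proof. move: b; time LB i. Qed.
Lemma D3 : awP i r.+1 -> ~~ haltP i r -> ~~ ltAr i r -> ltZr i r ->
  (brP N s i false && sL false i.+1 r || brP N s i true && sL true i.+1 r) = ~~ ltZr i r.+1.
Proof. time LL i. Qed.
End CR.
Lemma SLm i r : i <= N -> 0 < r -> awP i r.+1 -> ~~ haltP i r ->
  ((i == 0) || geSl i r) || sL false i r.+1 = geSl i r.+1.
Proof. time LL i. Qed.
Lemma SRm i r : i <= N -> 0 < r -> awP i r.+1 -> ~~ haltP i r ->
  ((i == N) || geSr i r) || sR true i r.+1 = geSr i r.+1.
Proof. time LL i. Qed.

Ltac UA := rewrite /Cf.ltZl /Cf.ltAl /Cf.ltZr /Cf.ltAr /Cf.Al /Cf.Ar.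
Section Arl.
Variables (i r : nat).
Hypothesis (Hi : 0 < i) (HiN : i <= N).
Lemma ltAl_mono : ltAl i r.+1 -> ltAl i r. Proof. UA; lia. Qed.
Lemma ltZl_mono : ltZl i r.+1 -> ltZl i r. Proof. UA; lia. Qed.
Lemma ltAl_Zl : ltAl i r -> ltZl i r. Proof. UA; lia. Qed.
Lemma ltAl_Zl1 : ltAl i r -> ltZl i r.+1. Proof. UA; lia. Qed.
Lemma Al_val0 : ltAl i r -> ~~ ltAl i r.+1 -> r.+1 - Al N s i = 0. Proof. UA; case: ifP; lia. Qed.
Lemma Al_S : ~~ ltAl i r -> (r - Al N s i).+1 = r.+1 - Al N s i. Proof. UA; case: ifP; lia. Qed.
Lemma Al_half : ~~ ltAl i r -> ltZl i r -> ~~ ltZl i r.+1 -> ((r - Al N s i).+1)./2 = i.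
Proof. UA; case: ifP; lia. Qed.
Lemma Al_bnd : ~~ ltAl i r -> ltZl i r -> r - Al N s i < 2 * N.+1.
Proof. UA; case: ifP; lia. Qed.
End Arl.
Section Arr.
Variables (i r : nat).
Hypothesis (Hi : i < N).
Lemma ltAr_mono : ltAr i r.+1 -> ltAr i r. Proof. UA; lia. Qed.
Lemma ltZr_mono : ltZr i r.+1 -> ltZr i r. Proof. UA; lia. Qed.
Lemma ltAr_Zr : ltAr i r -> ltZr i r. Proof. UA; lia. Qed.
Lemma ltAr_Zr1 : ltAr i r -> ltZr i r.+1. Proof. UA; lia. Qed.
Lemma Ar_val0 : ltAr i r -> ~~ ltAr i r.+1 -> r.+1 - Ar s i = 0. Proof. UA; case: ifP; lia. Qed.
Lemma Ar_S : ~~ ltAr i r -> (r - Ar s i).+1 = r.+1 - Ar s i. Proof. UA; case: ifP; lia. Qed.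
Lemma Ar_half : ~~ ltAr i r -> ltZr i r -> ~~ ltZr i r.+1 -> ((r - Ar s i).+1)./2 = N - i.
Proof. UA; case: ifP; lia. Qed.
Lemma Ar_bnd : ~~ ltAr i r -> ltZr i r -> r - Ar s i < 2 * N.+1.
Proof. UA; case: ifP; lia. Qed.
End Arr.
Lemma aw0 i r : awP i r -> i == 0 -> geSl i r. Proof. U; lia. Qed.
Lemma awN i r : i <= N -> awP i r -> i == N -> geSr i r. Proof. U; lia. Qed.
Lemma naw_l i r : 0 < i -> i <= N -> ~~ awP i r -> ltAl i r. Proof. U; lia. Qed.
Lemma naw_r i r : i < N -> ~~ awP i r -> ltAr i r. Proof. U; lia. Qed.
Lemma naw_sl i r : i <= N -> ~~ awP i r -> geSl i r = false. Proof. U; lia. Qed.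
Lemma naw_sr i r : i <= N -> ~~ awP i r -> geSr i r = false. Proof. U; lia. Qed.
Lemma halt_one r : N = 0 -> 0 < r -> haltP 0 r. Proof. U; lia. Qed.
Lemma bl_ne i : blP N s i false || blP N s i true. Proof. rewrite /blP; lia. Qed.
Lemma br_ne i : brP N s i false || brP N s i true. Proof. rewrite /brP; lia. Qed.
End A.

Notation LF P := [seq b <- [:: false; true] | P b].
Lemma L_nil (P : bool -> bool) : (LF P == [::]) = ~~ P false && ~~ P true.
Proof. by rewrite /=; case: (P false); case: (P true). Qed.
Lemma L_mem (P : bool -> bool) x : (x \in LF P) = P x.
Proof. by rewrite mem_filter; case: x; rewrite !inE /= ?andbT. Qed.
Lemma L_has (p P : bool -> bool) : has p (LF P) = p false && P false || p true && P true.
Proof. by rewrite /=; case: (P false); case: (P true); rewrite /= ?andbT ?andbF ?orbF. Qed.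
Lemma L_eq (P Q : bool -> bool) : P false = Q false -> P true = Q true -> LF P = LF Q.
Proof. by move=> /= -> ->. Qed.
Lemma L_size (P : bool -> bool) : size (LF P) = P false + P true.
Proof. by rewrite /=; case: (P false); case: (P true). Qed.
Lemma L_nil_eq (P : bool -> bool) : P false = false -> P true = false -> filter P [:: false; true] = [::].
Proof. by move=> /= -> ->. Qed.
Lemma L_false : LF (fun _ => false) = [::]. Proof. by []. Qed.

Section B.
Variables (N k s : nat).
Hypothesis Hs : s <= N.

Lemma inL_eq i r : inL N s i r = LF (fun b => (0 < i) && sR N s b i.-1 r).
Proof. by case: i. Qed.
Lemma inR_eq i r : inR N s i r = LF (fun b => (i < N) && sL N s b i.+1 r).
Proof. rewrite /inR ltnS; case: ifP => // _. Qed.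

Lemma clf_fin i r : i <= N -> (i == 0) || ~~ ltZl N s i r -> clf N s i r = Fin i.
Proof.
move=> HiN; rewrite /clf; case: ifP => [/eqP -> //|Hi0] /= Hz.
have Hi : 0 < i by rewrite lt0n Hi0.
have -> : ltAl N s i r = false by apply/negbTE; apply: contra Hz; exact: ltAl_Zl.
by rewrite (negbTE Hz).
Qed.
Lemma crf_fin i r : i <= N -> (i == N) || ~~ ltZr N s i r -> crf N s i r = Fin (N - i).
Proof.
move=> HiN; rewrite /crf; case: ifP => [/eqP -> //|HiN'] /= Hz; first by rewrite subnn.
have Hi : i < N by rewrite ltn_neqAle HiN' HiN.
have -> : ltAr s i r = false by apply/negbTE; apply: contra Hz; exact: ltAr_Zr.
by rewrite (negbTE Hz).
Qed.
Lemma isfin_clf i r : i <= N ->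
  is_fin (clf N s i r) = if (i == 0) || ~~ ltZl N s i r then Some i else None.
Proof.
move=> HiN; case: ifP => H; first by rewrite clf_fin.
move: H; rewrite /clf; case: ifP => //= Hi0 /negbFE Hz.
by case: ifP => //; rewrite Hz.
Qed.
Lemma isfin_crf i r : i <= N ->
  is_fin (crf N s i r) = if (i == N) || ~~ ltZr N s i r then Some (N - i) else None.
Proof.
move=> HiN; case: ifP => H; first by rewrite crf_fin.
move: H; rewrite /crf; case: ifP => //= Hi0 /negbFE Hz.
by case: ifP => //; rewrite Hz.
Qed.

Lemma TH i r : i <= N -> awP s i r ->
  try_halt k (AState true false (clf N s i r) (crf N s i r) (geSl N s i r) (geSr N s i r) None)
  = Sf N k s i r.
Proof.
move=> HiN Ha; rewrite /Sf HiN Ha /= /try_halt /= isfin_clf // isfin_crf //.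
rewrite /haltP.
case: ifP => H1 /=; last by []. case: ifP => H2 /=; last by [].
by rewrite andbT; case: (geSl N s i r && geSr N s i r).
Qed.

Lemma halted_Sf i r : halted (Sf N k s i r) = (i <= N) && awP s i r && haltP N s i r.
Proof. by rewrite /Sf; case: ifP. Qed.
Lemma awake_Sf i r : awake (Sf N k s i r) = (i <= N) && awP s i r.
Proof. by rewrite /Sf; case: ifP. Qed.

Lemma Sf_halt i r : i <= N -> haltP N s i r -> Sf N k s i r =
  AState true true (Fin i) (Fin (N - i)) true true (Some (ribbon_color k i (N - i))).
Proof.
move=> HiN H; have Ha := halt_aw Hs H.
rewrite /Sf HiN Ha H /=.
move: H; rewrite /haltP => /and4P [h1 h2 h3 h4].
by rewrite clf_fin // crf_fin // h3 h4.
Qed.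

Lemma X1 i r : i <= N -> ~~ haltP N s i r ->
  wake (i == 0) (i == N) (Sf N k s i r) =
  AState true false (clf N s i r) (crf N s i r) ((i == 0) || geSl N s i r) ((i == N) || geSr N s i r) None.
Proof.
move=> HiN Hh; rewrite /Sf HiN /=; case: ifP => Ha /=.
  rewrite (negbTE Hh).
  have -> : (i == 0) || geSl N s i r = geSl N s i r.
    by case E: (i == 0) => //=; rewrite (aw0 Hs Ha E).
  have -> : (i == N) || geSr N s i r = geSr N s i r.
    by case E: (i == N) => //=; rewrite (awN Hs HiN Ha E).
  by [].
have Ha' : ~~ awP s i r by rewrite Ha.
rewrite (naw_sl Hs HiN Ha') (naw_sr Hs HiN Ha') !orbF.
congr AState.
  rewrite /clf; case: ifP => // Hi0.
  by rewrite (naw_l Hs) // lt0n Hi0.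
rewrite /crf; case: ifP => // HiN'.
by rewrite (naw_r Hs) // ltn_neqAle HiN' HiN.
Qed.

Lemma CLm i r : 0 < i -> i <= N -> 0 < r -> awP s i r.+1 -> ~~ haltP N s i r ->
  start_if (LF (fun b => (i == N) && sR N s b i.-1 r || (i < N) && sL N s b i.+1 r))
     (stop_if (inL N s i r) (tick (clf N s i r))) = clf N s i r.+1.
Proof.
move=> Hi HiN Hr Ha Hh.
have Hi0 : (i == 0) = false by rewrite eqn0Ngt Hi.
rewrite inL_eq Hi.
case: (boolP (ltAl N s i r.+1)) => H1.
  have H0 := ltAl_mono Hs Hi HiN H1.
  rewrite (L_eq (Q := fun _ => false)) ?(C1 Hs Hi HiN Hr _ Ha Hh H1) //.
  by rewrite /clf Hi0 H0 H1.
case: (boolP (ltAl N s i r)) => H0.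
  rewrite (L_eq (Q := blP N s i)) ?(C2 Hs Hi HiN Hr _ Ha Hh H0 H1) //.
  have Hne : (LF (blP N s i) == [::]) = false.
    by rewrite L_nil; case/orP: (bl_ne Hs i) => ->; rewrite ?andbF.
  rewrite /clf Hi0 H0 (negbTE H1) (ltAl_Zl1 Hs Hi HiN H0) (Al_val0 Hs Hi HiN H0 H1) /start_if.
  by rewrite Hne.
case: (boolP (ltZl N s i r)) => Hz.
  have Hst : has (fun x => x \in Bl N s i) (LF (fun b => true && sR N s b i.-1 r)) = ~~ ltZl N s i r.+1.
    by rewrite /Bl L_has !L_mem /=; exact: C3.
  rewrite /clf Hi0 (negbTE H0) (negbTE H1) Hz /tick /stop_if Hst.
  case: (boolP (ltZl N s i r.+1)) => Hz1 /=.
    by rewrite Al_S.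
  by move: (Al_half Hs Hi HiN H0 Hz Hz1) => /= ->.
have Hz1 : ~~ ltZl N s i r.+1 by apply: contra Hz; exact: ltZl_mono.
by rewrite /clf Hi0 (negbTE H0) (negbTE H1) (negbTE Hz) (negbTE Hz1).
Qed.

Lemma CRm i r : i < N -> 0 < r -> awP s i r.+1 -> ~~ haltP N s i r ->
  start_if (LF (fun b => (i == 0) && sL N s b i.+1 r || (0 < i) && sR N s b i.-1 r))
     (stop_if (inR N s i r) (tick (crf N s i r))) = crf N s i r.+1.
Proof.
move=> Hi Hr Ha Hh.
have HiN : (i == N) = false by rewrite ltn_eqF.
rewrite inR_eq Hi.
case: (boolP (ltAr s i r.+1)) => H1.
  have H0 := ltAr_mono Hs Hi H1.
  rewrite (L_eq (Q := fun _ => false)) ?(D1 Hs Hi Hr _ Ha Hh H1) //.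
  by rewrite /crf HiN H0 H1.
case: (boolP (ltAr s i r)) => H0.
  rewrite (L_eq (Q := brP N s i)) ?(D2 Hs Hi Hr _ Ha Hh H0 H1) //.
  have Hne : (LF (brP N s i) == [::]) = false.
    by rewrite L_nil; case/orP: (br_ne Hs i) => ->; rewrite ?andbF.
  rewrite /crf HiN H0 (negbTE H1) (ltAr_Zr1 Hs Hi H0) (Ar_val0 Hs Hi H0 H1) /start_if.
  by rewrite Hne.
case: (boolP (ltZr N s i r)) => Hz.
  have Hst : has (fun x => x \in Br N s i) (LF (fun b => true && sL N s b i.+1 r)) = ~~ ltZr N s i r.+1.
    by rewrite /Br L_has !L_mem /=; exact: D3.
  rewrite /crf HiN (negbTE H0) (negbTE H1) Hz /tick /stop_if Hst.
  case: (boolP (ltZr N s i r.+1)) => Hz1 /=.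
    by rewrite (Ar_S Hs Hi).
  by move: (Ar_half Hs Hi H0 Hz Hz1) => /= ->.
have Hz1 : ~~ ltZr N s i r.+1 by apply: contra Hz; exact: ltZr_mono.
by rewrite /crf HiN (negbTE H0) (negbTE H1) (negbTE Hz) (negbTE Hz1).
Qed.

Lemma fin_asm i r cl cr x y tL tR : i <= N -> awP s i r.+1 ->
  cl = clf N s i r.+1 -> cr = crf N s i r.+1 -> x = geSl N s i r.+1 -> y = geSr N s i r.+1 ->
  tL = mLf N s i r.+1 -> tR = mRf N s i r.+1 ->
  (try_halt k (AState true false cl cr x y None), tL, tR) = (Sf N k s i r.+1, mLf N s i r.+1, mRf N s i r.+1).
Proof. by move=> HiN Ha -> -> -> -> -> ->; rewrite TH. Qed.

Lemma step_ok i r : i <= N -> 0 < r ->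
  step_agent (i == 0) (i == N) k (Sf N k s i r) (inL N s i r) (inR N s i r)
  = (Sf N k s i r.+1, mLf N s i r.+1, mRf N s i r.+1).
Proof.
move=> HiN Hr.
have MRl : mRf N s i r.+1 = LF (fun b => ~~ haltP N s i r && ((i == 0) && ((i < N) && sL N s b i.+1 r)
   || (i < N) && ((0 < i) && sR N s b i.-1 r))).
  by apply: eq_filter => b; exact: MR.
have MLl : mLf N s i r.+1 = LF (fun b => ~~ haltP N s i r && ((i == N) && ((0 < i) && sR N s b i.-1 r)
   || (0 < i) && ((i < N) && sL N s b i.+1 r))).
  by apply: eq_filter => b; exact: ML.
case: (boolP (haltP N s i r)) => Hh.
  rewrite /step_agent halted_Sf HiN (halt_aw Hs Hh) Hh /=.
  by rewrite (Sf_halt HiN Hh) (Sf_halt HiN (halt_mono Hs HiN Hh)) MRl MLl Hh.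
case: (boolP (awP s i r.+1)) => Ha; last first.
  have Ha0 : ~~ awP s i r by apply: contra Ha; exact: aw_mono.
  have -> : Sf N k s i r = asleep by rewrite /Sf HiN (negbTE Ha0).
  have -> : Sf N k s i r.+1 = asleep by rewrite /Sf HiN (negbTE Ha).
  have E1a b := (E1 Hs b HiN Hr Ha).1.
  have E1b b := (E1 Hs b HiN Hr Ha).2.
  have M0 : mLf N s i r.+1 = [::].
    by rewrite MLl; apply/eqP; rewrite L_nil ?E1a ?E1b ?andbF ?orbF.
  have M1 : mRf N s i r.+1 = [::].
    by rewrite MRl; apply/eqP; rewrite L_nil ?E1a ?E1b ?andbF ?orbF.
  have I0 : inL N s i r = [::].
    by rewrite inL_eq; apply/eqP; rewrite L_nil ?E1a.
  have I1 : inR N s i r = [::].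
    by rewrite inR_eq; apply/eqP; rewrite L_nil ?E1b.
  by rewrite M0 M1 I0 I1.
have Hw : ~~ awake (Sf N k s i r) && (inL N s i r == [::]) && (inR N s i r == [::]) = false.
  rewrite awake_Sf HiN /=; case: (boolP (awP s i r)) => Ha0 //=.
  have := E2 Hs HiN Hr Ha0 Ha; rewrite inL_eq inR_eq !L_nil.
  by case/orP => /andP [_ ->]; rewrite ?andbF.
rewrite /step_agent halted_Sf (negbTE Hh) andbF Hw (X1 HiN Hh).
case E0: (i == 0); case EN: (i == N) => /=.
- have Hi0 : i = 0 by apply/eqP.
  have HN0 : N = 0 by move/eqP: EN; rewrite Hi0.
  by move: Hh; rewrite Hi0 (halt_one Hs HN0 Hr).
- have Hi' : i < N by rewrite ltn_neqAle EN HiN.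
  have Hi0 : (0 < i) = false by rewrite lt0n E0.
  have TR : inR N s i r = mRf N s i r.+1.
    by rewrite MRl inR_eq; apply: L_eq; rewrite E0 (negbTE Hh) Hi' Hi0 /= ?andbF ?orbF.
  have TL : [::] = mLf N s i r.+1.
    by rewrite MLl; symmetry; apply/eqP; rewrite L_nil Hi0 EN /= ?andbF.
  apply: fin_asm => //.
  + by rewrite /clf E0.
  + rewrite -(CRm Hi' Hr Ha Hh); congr start_if.
    by rewrite inR_eq; apply: L_eq; rewrite E0 Hi' Hi0 /= ?orbF.
  + by rewrite -(SLm Hs HiN Hr Ha Hh) E0.
  + by rewrite -(SRm Hs HiN Hr Ha Hh) EN /= TR /mRf L_mem.
- have Hi : 0 < i by rewrite lt0n E0.
  have Hi' : (i < N) = false by move/eqP: EN => ->; rewrite ltnn.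
  have TL : inL N s i r = mLf N s i r.+1.
    by rewrite MLl inL_eq; apply: L_eq; rewrite EN (negbTE Hh) Hi' Hi /= ?andbF ?orbF.
  have TR : [::] = mRf N s i r.+1.
    by rewrite MRl; symmetry; apply/eqP; rewrite L_nil Hi' E0 /= ?andbF.
  apply: fin_asm => //.
  + rewrite -(CLm Hi HiN Hr Ha Hh); congr start_if.
    by rewrite inL_eq; apply: L_eq; rewrite EN Hi' Hi /= ?orbF.
  + by rewrite /crf EN.
  + by rewrite -(SLm Hs HiN Hr Ha Hh) E0 /= TL /mLf L_mem.
  + by rewrite -(SRm Hs HiN Hr Ha Hh) EN.
- have Hi : 0 < i by rewrite lt0n E0.
  have Hi' : i < N by rewrite ltn_neqAle EN HiN.
  have TL : inR N s i r = mLf N s i r.+1.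
    by rewrite MLl inR_eq; apply: L_eq; rewrite EN (negbTE Hh) Hi' Hi /= ?andbF ?orbF.
  have TR : inL N s i r = mRf N s i r.+1.
    by rewrite MRl inL_eq; apply: L_eq; rewrite E0 (negbTE Hh) Hi' Hi /= ?andbF ?orbF.
  apply: fin_asm => //.
  + rewrite -(CLm Hi HiN Hr Ha Hh); congr start_if.
    by rewrite inR_eq; apply: L_eq; rewrite EN Hi' /= ?orbF.
  + rewrite -(CRm Hi' Hr Ha Hh); congr start_if.
    by rewrite inL_eq; apply: L_eq; rewrite E0 Hi /= ?orbF.
  + by rewrite -(SLm Hs HiN Hr Ha Hh) E0 /= TL /mLf L_mem.
  + by rewrite -(SRm Hs HiN Hr Ha Hh) EN /= TR /mRf L_mem.
Qed.
End B.

Section C.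
Variables (N k s : nat).
Hypothesis Hs : s <= N.

Lemma sL1 b i : sL N s b i 1 = (i == s) && (0 < s) && (~~ b || (s == N)).
Proof. rewrite /sL; case: b; apply/idP/idP; lia. Qed.
Lemma sR1 b i : sR N s b i 1 = (i == s) && (s < N) && (b || (s == 0)).
Proof. rewrite /sR; case: b; apply/idP/idP; lia. Qed.
Lemma aw1 i : awP s i 1 = (i == s). Proof. rewrite /awP; apply/idP/idP; lia. Qed.

Lemma init_ok i :
  [/\ st (init_config N.+1 k s) i = Sf N k s i 1,
      msgL (init_config N.+1 k s) i = mLf N s i 1 &
      msgR (init_config N.+1 k s) i = mRf N s i 1].
Proof.
have ML1 : mLf N s i 1 = LF (fun b => (i == s) && (0 < s) && (~~ b || (s == N))).
  by apply: eq_filter => b; rewrite sL1.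
have MR1 : mRf N s i 1 = LF (fun b => (i == s) && (s < N) && (b || (s == 0))).
  by apply: eq_filter => b; rewrite sR1.
rewrite ML1 MR1 /init_config /=.
case: eqP => [->|Hne] /=; last first.
  have Hf : (i == s) = false by apply/eqP.
  by rewrite /Sf aw1 Hf andbF.

have Ha : awP s s 1 by rewrite aw1.
have G1 : geSl N s s 1 by rewrite /geSl; lia.
have G2 : geSr N s s 1 by rewrite /geSr; lia.
have CL : clf N s s 1 = if s == 0 then Fin 0 else if s == N then Run 0 [:: false; true] else Idle.
  rewrite /clf; case: ifP => E0 //; case EN: (s == N).
    have -> : ltAl N s s 1 = false by rewrite /ltAl; lia.
    have -> : ltZl N s s 1 = true by rewrite /ltZl; lia.
    have -> : 1 - Al N s s = 0 by rewrite /Al; case: ifP; lia.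
    by rewrite /Bl /blP EN orbT.
  by have -> : ltAl N s s 1 = true by rewrite /ltAl; lia.
have CR : crf N s s 1 = if s == N then Fin 0 else if s == 0 then Run 0 [:: false; true] else Idle.
  rewrite /crf; case: ifP => EN //; case E0: (s == 0).
    have -> : ltAr s s 1 = false by rewrite /ltAr; lia.
    have -> : ltZr N s s 1 = true by rewrite /ltZr; lia.
    have -> : 1 - Ar s s = 0 by rewrite /Ar; case: ifP; lia.
    by rewrite /Br /brP E0.
  by have -> : ltAr s s 1 = true by rewrite /ltAr; lia.
rewrite -(TH k Hs Hs Ha) G1 G2 /start_agent CL CR.
have Hlt : (s < N) = (s != N) by rewrite ltn_neqAle Hs andbT.
rewrite Hlt lt0n.
case E0: (s == 0); case EN: (s == N) => //=.
Qed.
End C.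

Section D.
Variables (N k s : nat).
Hypothesis Hs : s <= N.

Lemma sL_out b i r : N < i -> sL N s b i r = false. Proof. rewrite /sL; lia. Qed.
Lemma sR_out b i r : N <= i -> sR N s b i r = false. Proof. rewrite /sR; lia. Qed.

Lemma step_out i r : N < i ->
  step_agent (i == 0) (i == N) k (Sf N k s i r) (inL N s i r) (inR N s i r)
  = (Sf N k s i r.+1, mLf N s i r.+1, mRf N s i r.+1).
Proof.
move=> Hi.
have HS r' : Sf N k s i r' = asleep by rewrite /Sf leqNgt Hi.
have -> : mLf N s i r.+1 = [::] by apply/eqP; rewrite L_nil !sL_out.
have -> : mRf N s i r.+1 = [::] by apply/eqP; rewrite L_nil !sR_out // ltnW.
have -> : inL N s i r = [::].
  by rewrite inL_eq; apply/eqP; rewrite L_nil !sR_out ?andbF //; lia.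
have -> : inR N s i r = [::] by rewrite /inR ltnS ltnNge ltnW.

by rewrite !HS.
Qed.

Lemma next_eq n c i :
  [/\ st (next_config n.+1 k c) i = (step_agent (i == 0) (i == n) k (st c i)
         (if i is j.+1 then msgR c j else [::]) (if i.+1 < n.+1 then msgL c i.+1 else [::])).1.1,
      msgL (next_config n.+1 k c) i = (step_agent (i == 0) (i == n) k (st c i)
         (if i is j.+1 then msgR c j else [::]) (if i.+1 < n.+1 then msgL c i.+1 else [::])).1.2 &
      msgR (next_config n.+1 k c) i = (step_agent (i == 0) (i == n) k (st c i)
         (if i is j.+1 then msgR c j else [::]) (if i.+1 < n.+1 then msgL c i.+1 else [::])).2].
Proof. by []. Qed.

Lemma inv_cf r : 0 < r -> forall i,
  [/\ st (after_round N.+1 k s r) i = Sf N k s i r,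
      msgL (after_round N.+1 k s r) i = mLf N s i r &
      msgR (after_round N.+1 k s r) i = mRf N s i r].
Proof.
elim: r => // r IH _ i.
case: r IH => [|r] IH.
  by have [] := init_ok k Hs i.
have {}IH := IH (ltn0Sn r).
have -> : after_round N.+1 k s r.+2 = next_config N.+1 k (after_round N.+1 k s r.+1) by [].
have [-> -> ->] := next_eq N (after_round N.+1 k s r.+1) i.
have [-> _ _] := IH i.
have -> : (if i is j.+1 then msgR (after_round N.+1 k s r.+1) j else [::]) = inL N s i r.+1.
  by case: i => // j; have [_ _ ->] := IH j.
have -> : (if i.+1 < N.+1 then msgL (after_round N.+1 k s r.+1) i.+1 else [::]) = inR N s i r.+1.
  by rewrite /inR; case: ifP => // _; have [_ -> _] := IH i.+1.
case: (leqP i N) => Hi.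
  by rewrite step_ok.
by rewrite step_out.
Qed.
End D.

Lemma count_diff (P Q : pred nat) s : (forall x, Q x -> P x) ->
  count (fun x => P x && ~~ Q x) s = count P s - count Q s.
Proof.
move=> HQP; elim: s => //= x s IH.
have Hs : count Q s <= count P s by apply: sub_count => y; apply: HQP.
rewrite IH; case EQ: (Q x); first by rewrite (HQP _ EQ) /=; lia.
by case: (P x) => /=; lia.
Qed.

Lemma count_lt q n : count (fun i => i < q) (iota 0 n) = minn q n.
Proof.
elim: n => [|n IH]; first by rewrite minn0.
by rewrite -addn1 iotaD count_cat IH /= add0n; case: (ltnP n q) => H; lia.
Qed.

Section Rib.
Variables (n k : nat).
Hypotheses (Hn : 0 < n) (Hk : 0 < k).
Definition qq m := (m * n + k.-1) %/ k.

Lemma qq_spec m : m * n <= qq m * k <= m * n + k.-1.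
Proof.
rewrite /qq; have := divn_eq (m * n + k.-1) k; have := ltn_pmod (m * n + k.-1) Hk.
set q := _ %/ k; set r := _ %% k; lia.
Qed.

Lemma g_eq m : m <= k -> count (fun i => i * k < m * n) (iota 0 n) = qq m.
Proof.
move=> Hm.
have -> : count (fun i => i * k < m * n) (iota 0 n) = count (fun i => i < qq m) (iota 0 n).
  apply: eq_count => i; rewrite /qq (leq_divRL _ _ Hk) mulSn; apply/idP/idP; lia.
rewrite count_lt; apply/minn_idPl.
rewrite /qq -ltnS ltn_divLR //.
have : m * n <= k * n by rewrite leq_mul2r Hm orbT.
rewrite mulSn; lia.
Qed.

Lemma qq_mono m : qq m <= qq m.+1.
Proof. by rewrite /qq leq_div2r // leq_add2r leq_mul2r leqnSn orbT. Qed.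

Definition csz a := qq a.+1 - qq a.

Lemma csz_bnd a : csz a * k + 1 <= n + k /\ n + 1 <= csz a * k + k.
Proof.
have := qq_spec a; have := qq_spec a.+1; have := qq_mono a.
rewrite /csz mulnBl mulSn; set x := qq a; set y := qq a.+1.
move=> h1 h2 h3.
have : x * k <= y * k by rewrite leq_mul2r h1 orbT.
lia.
Qed.

Lemma ribbon_ok (c : nat -> nat) : (forall i, i < n -> c i = i * k %/ n + 1) -> is_k_ribbon n k c.
Proof.
move=> Hc.
have mono i j : i <= j -> j < n -> c i <= c j.
  move=> Hij Hj; rewrite Hc ?Hc //; last by apply: leq_ltn_trans Hj.
  by rewrite leq_add2r leq_div2r // leq_mul2r Hij orbT.
split; [|split; [|split]].
- move=> i Hi; rewrite Hc // addn1 ltnS /= ltn_divLR //.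
  by rewrite mulnC ltn_pmul2l.
- move=> i j l Hij Hjl Hl Hil.
  have := mono _ _ Hij (leq_ltn_trans Hjl Hl); have := mono _ _ Hjl Hl; lia.
- exact: mono.
- have Hcs a : 1 <= a <= k -> class_size n c a = csz a.-1.
    move=> /andP [Ha1 Hak].
    rewrite /class_size.
    have -> : count (fun i => c i == a) (iota 0 n) =
       count (fun i => (i * k < a.-1.+1 * n) && ~~ (i * k < a.-1 * n)) (iota 0 n).
      apply: eq_in_count => i; rewrite mem_iota add0n => /andP [_ Hi].
      rewrite Hc // (prednK Ha1) -(ltn_divLR _ _ Hn) -leqNgt -(leq_divRL _ _ Hn); lia.
    rewrite count_diff; last by move=> x /= h; apply: leq_trans h _; rewrite leq_mul2r leqnSn orbT.
    rewrite !g_eq // ?prednK //; last by apply: leq_trans (leq_pred _) Hak.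
  move=> a b Ha Hb; rewrite !Hcs //.
  have [h1 _] := csz_bnd a.-1; have [_ h2] := csz_bnd b.-1.
  have : csz a.-1 * k < (csz b.-1).+2 * k by rewrite !mulSn; lia.
  by rewrite ltn_pmul2r.
Qed.
End Rib.

Lemma sum01 m (f : nat -> nat) : (forall i, f i <= 1) ->
  (forall i j, i < m -> j < m -> 0 < f i -> 0 < f j -> i = j) -> \sum_(i < m) f i <= 1.
Proof.
move=> H1; elim: m => [|m IH] Hu; first by rewrite big_ord0.
rewrite big_ord_recr /=.
case: (posnP (f m)) => Hm.
  by rewrite Hm addn0; apply: IH => i j Hi Hj; apply: Hu; apply: ltnW.
rewrite big1 ?add0n // => i _.
apply/eqP; rewrite -leqn0 leqNgt; apply/negP => Hi.
by have := Hu i m (ltnW (ltn_ord i)) (ltnSn m) Hi Hm; move=> /eqP; rewrite ltn_eqF.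
Qed.

Lemma sum_ind (f : nat -> nat) M R : (forall r, f r <= 2 * ((0 < r) && (r <= M))) ->
  \sum_(r < R) f r <= 2 * M.
Proof.
move=> Hf.
suff : \sum_(r < R) f r <= 2 * minn R.-1 M by move=> h; apply: leq_trans h _; rewrite leq_mul2l geq_minr orbT.
elim: R => [|R IH]; first by rewrite big_ord0.
rewrite big_ord_recr /=.
have HfR := Hf R.
move: IH HfR; set S := \sum_(i < R) f i; move: S (f R) => S x.
case: R => [|R] /=; first by rewrite min0n muln0 => h1 h2; lia.
case: (leqP R.+1 M) => h /= h1 h2.
  have e1 : minn R M = R by apply/minn_idPl; apply: ltnW.
  have e2 : minn R.+1 M = R.+1 by apply/minn_idPl.
  rewrite e1 in h1; rewrite ?e2; rewrite muln1 in h2; lia.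
have e1 : minn R M = M by apply/minn_idPr.
have e2 : minn R.+1 M = M by apply/minn_idPr; apply: ltnW.
rewrite e1 in h1; rewrite ?e2 ?muln0 in h2 *; lia.
Qed.

Section F.
Variables (N k s : nat).
Hypothesis Hs : s <= N.

Lemma halt_final i : i <= N -> awP s i (3 * N.+1) && haltP N s i (3 * N.+1).
Proof. rewrite /awP /haltP /ltZl /ltZr /geSl /geSr; lia. Qed.

Lemma bit_zero b i r : 3 * N.+1 < r -> sL N s b i r = false /\ sR N s b i r = false.
Proof. rewrite /sL /sR; case: b; split; lia. Qed.
Lemma bit_le1 b i r : sL N s b i r + sR N s b i r <= 1.
Proof.
case Li: (sL N s b i r); case Ri: (sR N s b i r) => //=.
move: Li Ri; rewrite /sL /sR; case: b => /=; lia.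
Qed.
Lemma uLL b i j r : sL N s b i r -> sL N s b j r -> i = j.
Proof. rewrite /sL; case: b => /=; lia. Qed.
Lemma uRR b i j r : sR N s b i r -> sR N s b j r -> i = j.
Proof. rewrite /sR; case: b => /=; lia. Qed.
Lemma uLR b i j r : sL N s b i r -> sR N s b j r -> i = j.
Proof. rewrite /sL /sR; case: b => /=; lia. Qed.
Lemma bit_uniq b i j r : 0 < sL N s b i r + sR N s b i r -> 0 < sL N s b j r + sR N s b j r -> i = j.
Proof.
case Li: (sL N s b i r); case Ri: (sR N s b i r) => //= _;
case Lj: (sL N s b j r); case Rj: (sR N s b j r) => //= _.
all: first [ exact: (uLL Li Lj) | exact: (uRR Ri Rj) | exact: (uLR Li Rj) | symmetry; exact: (uLR Lj Ri)].
Qed.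

Lemma bit_sum b r : \sum_(i < N.+1) (sL N s b i r + sR N s b i r) <= (r <= 3 * N.+1).
Proof.
case: (leqP r (3 * N.+1)) => Hr.
  have H := @sum01 N.+1 (fun i => sL N s b i r + sR N s b i r) (fun i => bit_le1 b i r)
     (fun i j _ _ => @bit_uniq b i j r).
  by apply: leq_trans H _.
by rewrite big1 // => i _; have [-> ->] := bit_zero b i Hr.
Qed.

Lemma bits_round r : bits_in_round N.+1 k s r <= 2 * ((0 < r) && (r <= 3 * N.+1)).
Proof.
case: r => [|r]; first by rewrite /bits_in_round big1.
rewrite /bits_in_round.
have -> : \sum_(i < N.+1) (size (msgL (after_round N.+1 k s r.+1) i) + size (msgR (after_round N.+1 k s r.+1) i))
  = \sum_(i < N.+1) (sL N s false i r.+1 + sR N s false i r.+1) + \sum_(i < N.+1) (sL N s true i r.+1 + sR N s true i r.+1).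
  rewrite -big_split /=; apply: eq_bigr => i _.
  have [_ -> ->] := inv_cf k Hs (ltn0Sn r) i.
  rewrite /mLf /mRf !L_size; lia.
have := bit_sum false r.+1; have := bit_sum true r.+1; rewrite /=; lia.
Qed.

Lemma tl_mono a b : a <= b -> trunc_log 2 a <= trunc_log 2 b. Proof. exact: leq_trunc_log. Qed.

Lemma cm_bnd c v : (c = Idle \/ (exists B, c = Run v B /\ v < (N.+1).*2) \/ (c = Fin v /\ v <= N.+1)) ->
  counter_mem c <= 6 + trunc_log 2 N.+1.
Proof.
have Hd := trunc_log2_double (ltn0Sn N).
case=> [->|[[B [-> Hv]]|[-> Hv]]] /=; rewrite /bitlen.
- lia.
- have := tl_mono (ltnW Hv); lia.
- have := tl_mono Hv; lia.
Qed.

Lemma mem_Sf i r : 0 < k -> state_mem (Sf N k s i r) <= 2 * trunc_log 2 N.+1 + trunc_log 2 k + 20.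
Proof.
move=> Hk; rewrite /Sf; case: ifP => [/andP [Hi Ha]|_]; last by rewrite /state_mem /=; lia.
rewrite /state_mem /=.
have H1 : counter_mem (clf N s i r) <= 6 + trunc_log 2 N.+1.
  rewrite /clf; case: ifP => Hi0.
    by apply: (cm_bnd (v := 0)); right; right; split.
  have Hi0' : 0 < i by rewrite lt0n Hi0.
  case: ifP => H1; first by apply: (cm_bnd (v := 0)); left.
  case: ifP => H2.
    apply: (cm_bnd (v := r - Al N s i)); right; left; exists (Bl N s i); split => //.
    by rewrite -mul2n; apply: (Al_bnd Hs) => //; rewrite H1.
  by apply: (cm_bnd (v := i)); right; right; split => //; apply: ltnW.
have H2 : counter_mem (crf N s i r) <= 6 + trunc_log 2 N.+1.
  rewrite /crf; case: ifP => HiN.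
    by apply: (cm_bnd (v := 0)); right; right; split.
  have HiN' : i < N by rewrite ltn_neqAle HiN Hi.
  case: ifP => K1; first by apply: (cm_bnd (v := 0)); left.
  case: ifP => K2.
    apply: (cm_bnd (v := r - Ar s i)); right; left; exists (Br N s i); split => //.
    by rewrite -mul2n; apply: (Ar_bnd Hs) => //; rewrite K1.
  by apply: (cm_bnd (v := N - i)); right; right; split => //; lia.
have H3 : (if haltP N s i r then Some (ribbon_color k i (N - i)) else None) = None \/
          (if haltP N s i r then Some (ribbon_color k i (N - i)) else None) = Some (ribbon_color k i (N - i)).
  by case: ifP; [right|left].
case: H3 => ->; first lia.
have Hc : ribbon_color k i (N - i) <= k.
  rewrite /ribbon_color.
  have -> : i + (N - i) + 1 = N.+1 by lia.

  rewrite addn1 ltn_divLR // mulnC ltn_pmul2l //.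
have := tl_mono Hc; rewrite /bitlen; lia.
Qed.
End F.

Theorem theorem4 :
  exists C : nat,
  forall n k s : nat, 0 < n -> 0 < k -> s < n ->
    let final := after_round n k s (3 * n) in
    [/\ (* every agent has decided and halted within 3n rounds ... *)
        (forall i, i < n -> halted (st final i)),
        (* ... and the decided colors form a k-ribbon, *)
        is_k_ribbon n k (fun i => odflt 0 (output (st final i))),
        (* at most 6n message bits are sent in total, *)
        (forall R, \sum_(r < R) bits_in_round n k s r <= 6 * n) &
        (* each agent uses 2 log n + log k + O(1) bits of memory, always *)
        (forall r i, i < n ->
           state_mem (st (after_round n k s r) i)
             <= 2 * trunc_log 2 n + trunc_log 2 k + C)].
Proof.
exists 20 => n k s Hn Hk Hsn final.
rewrite /final {final}.
case: n Hn Hsn => [//|N] _; rewrite ltnS => Hs.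

have Hr0 : 0 < 3 * N.+1 by [].
split.
- move=> i; rewrite ltnS => Hi; have [-> _ _] := inv_cf k Hs Hr0 i.
  by rewrite halted_Sf Hi /=; apply: halt_final.
- apply: ribbon_ok => // i; rewrite ltnS => Hi; have [-> _ _] := inv_cf k Hs Hr0 i.
  have /andP [Ha Hh] := halt_final Hs Hi.
  rewrite /Sf Hi Ha Hh /= /ribbon_color.
  by have -> : i + (N - i) + 1 = N.+1 by lia.
- move=> R; have -> : 6 * N.+1 = 2 * (3 * N.+1) by lia.
  by apply: sum_ind => r; apply: bits_round.
- move=> r i Hi; case: r => [|r]; first by rewrite /state_mem /=; lia.
  have [-> _ _] := inv_cf k Hs (ltn0Sn r) i.
  exact: mem_Sf.
Qed.
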